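(* For every $1$-Sperner hypergraph ${\cal H}=(V,{\cal E})$ with ${\cal E}\neq\emptyset$ and ${\cal E}\neq\{\emptyset\}$, there exists a vector $x\in\mathbb{R}^V_{+}$ (nonnegative entries) such that $A^{\cal H}x=\mathbf{1}$ and $\mathbf{1}^\top x\ge1$.
   Context: A hypergraph ${\cal H}=(V,{\cal E})$ consists of a finite vertex set $V$ and a set ${\cal E}$ of subsets of $V$. It is $1$-Sperner if every two distinct hyperedges $e,f$ satisfy $\min\{|e\setminus f|,|f\setminus e|\}=1$. The incidence matrix $A^{\cal H}\in\{0,1\}^{{\cal E}\times V}$ has rows indexed by hyperedges and columns by vertices, with entry $1$ at $(e,v)$ iff $v\in e$. $\mathbf{1}$ denotes the all-ones vector of appropriate dimension. *)

(* Defs.v *)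
From mathcomp Require Import all_boot all_order all_algebra.
From mathcomp Require Export reals.
Set Implicit Arguments. Unset Strict Implicit. Unset Printing Implicit Defensive.
Import Order.TTheory GRing.Theory Num.Theory.
Local Open Scope ring_scope.

Definition one_sperner (V : finType) (E : {set {set V}}) : Prop :=
  forall e f, e \in E -> f \in E -> e != f ->
    minn #|e :\: f| #|f :\: e| = 1%N.

(* Incidence matrix A^H, rows indexed by hyperedges, columns by vertices:
   entry (e,v) is 1 iff v \in e. *)
Definition incidence (R : realType) (V : finType) (e : {set V}) (v : V) : R :=
  (v \in e)%:R.

Definition incidence_mul (R : realType) (V : finType)
    (x : V -> R) (e : {set V}) : R :=
  \sum_(v : V) incidence R e v * x v.

(* Main.v *)
Require Import Defs.
From mathcomp Require Import all_boot all_order all_algebra.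
From mathcomp Require Import reals.
From mathcomp Require Import zify lra.
Import Order.TTheory GRing.Theory Num.Theory.
Set Implicit Arguments. Unset Strict Implicit. Unset Printing Implicit Defensive.

Section Comb.
Variable V : finType.

Lemma card_diff_le (e f : {set V}) : #|e| <= #|f| -> #|e :\: f| <= #|f :\: e|.
Proof.
have h1 := cardsID f e; have h2 := cardsID e f; rewrite setIC in h2. lia.
Qed.

Lemma sp_facts (E : {set {set V}}) e f : one_sperner E -> e \in E -> f \in E -> e != f ->
  [/\ 1 <= #|e :\: f|, 1 <= #|f :\: e| & (#|e :\: f| = 1 \/ #|f :\: e| = 1)].
Proof. move=> h eE fE nef; have := h e f eE fE nef. rewrite /minn; case: ltnP; split; lia. Qed.

Lemma card1_eq (A : {set V}) a b : #|A| = 1 -> a \in A -> b \in A -> a = b.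
Proof. move/eqP/cards1P=> [c ->]; rewrite !inE => /eqP-> /eqP->. done. Qed.

Lemma card2_le (A : {set V}) a b : a != b -> a \in A -> b \in A -> 2 <= #|A|.
Proof.
move=> nab aA bA; have : [set a; b] \subset A by apply/subsetP=> u; rewrite !inE => /orP[]/eqP->.
by move/subset_leq_card; rewrite cards2 nab.
Qed.

Lemma good_vertex (E : {set {set V}}) : one_sperner E -> E != set0 -> set0 \notin E ->
  exists z, (exists2 e0, e0 \in E & z \in e0) /\
    (forall e f, e \in E -> f \in E -> z \in e -> z \notin f -> e :\ z \subset f).
Proof.
move=> hsp /set0Pn [e1 e1E] h0.
case: (arg_minnP (fun e : {set V} => #|e|) e1E) => e0 e0E e0min.
have F1 : forall f, f \in E -> f != e0 -> #|e0 :\: f| = 1.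
  move=> f fE nf; have nf' : e0 != f by rewrite eq_sym.
  have [a b c] := sp_facts hsp e0E fE nf'.
  have := card_diff_le (e0min f fE). lia.
case: (set0Pn (E :\ e0)) => [[f1 f1E]|hE].
- have f1E' : f1 \in [pred f | f \in E :\ e0] by [].
  case: (arg_maxnP (fun e : {set V} => #|e|) f1E') => fs fsin fsmax.
  move: fsin; rewrite /= !inE => /andP[nfs fsE].
  have : 0 < #|e0 :\: fs| by rewrite F1.
  rewrite card_gt0 => /set0Pn [z]; rewrite inE => /andP[zfs ze0].
  exists z; split; first by exists e0.
  move=> e f eE fE ze zf; apply/subsetP => v; rewrite !inE => /andP[vz ve].
  case vf: (v \in f) => //; exfalso.
  have nfe0 : f != e0 by apply: contraNneq zf => ->.
  have Hf := F1 f fE nfe0. have Hfs := F1 fs fsE nfs.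
  have ze0f : z \in e0 :\: f by rewrite inE zf ze0.
  have ze0fs : z \in e0 :\: fs by rewrite inE zfs ze0.
  have ve0 : v \notin e0.
    apply/negP=> ve0; have : v \in e0 :\: f by rewrite inE vf ve0.
    by move/(card1_eq Hf ze0f) => /esym/eqP; rewrite (negbTE vz).
  have nee0 : e != e0 by apply: contraNneq ve0 => <-.
  have := F1 e eE nee0; move/eqP/cards1P => [y hy].
  have : y \in e0 :\: e by rewrite hy inE.
  rewrite inE => /andP[ye ye0].
  have yz : y != z by apply: contraNneq ye => ->.
  have yf : y \in f.
    apply/negPn/negP => yf; have : y \in e0 :\: f by rewrite inE yf ye0.
    by move/(card1_eq Hf ze0f) => /esym/eqP; rewrite (negbTE yz).
  have yfs : y \in fs.
    apply/negPn/negP => yf'; have : y \in e0 :\: fs by rewrite inE yf' ye0.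
    by move/(card1_eq Hfs ze0fs) => /esym/eqP; rewrite (negbTE yz).
  have nef : e != f by apply: contraTneq ze => ->.
  have c2 : 2 <= #|e :\: f| by apply: (card2_le vz); rewrite inE ?vf ?zf.
  have [_ _ []] := sp_facts hsp eE fE nef; first by move=> h; rewrite h in c2.
  move=> Hfe. have yfe : y \in f :\: e by rewrite inE ye yf.
  have nefs : e != fs by apply: contraTneq ze => ->.
  have efs : e \in E :\ e0 by rewrite !inE nee0 eE.
  have lefs := fsmax e efs.
  have Hefs : #|e :\: fs| = 1.
    have [a b c] := sp_facts hsp eE fsE nefs. have := card_diff_le lefs. move: a b c; clear; lia.
  have zefs : z \in e :\: fs by rewrite inE zfs ze.
  have vfs : v \in fs.
    apply/negPn/negP => vfs; have : v \in e :\: fs by rewrite inE vfs ve.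
    by move/(card1_eq Hefs zefs) => /esym/eqP; rewrite (negbTE vz).
  have nffs : f != fs by apply/negP => /eqP hf; rewrite hf vfs in vf.
  have [+ _ _] := sp_facts hsp fE fsE nffs.
  rewrite card_gt0 => /set0Pn [u]; rewrite inE => /andP[ufs uf].
  case ue: (u \in e).
    have : u \in e :\: fs by rewrite inE ufs ue.
    by move/(card1_eq Hefs zefs) => uz; rewrite uz uf in zf.
  have : u \in f :\: e by rewrite inE ue uf.
  by move/(card1_eq Hfe yfe) => uy; rewrite uy (negbTE ufs) in yfs.
- have : e0 != set0 by apply: contraNneq h0 => <-.
  case/set0Pn => z ze0; exists z; split; first by exists e0.
  move=> e f eE fE ze zf; exfalso; apply: hE; exists f.
  by rewrite !inE fE andbT; apply: contraNneq zf => ->.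
Qed.

Lemma sp_sub (E F : {set {set V}}) : F \subset E -> one_sperner E -> one_sperner F.
Proof. move=> /subsetP sub h e f eF fF; exact: h (sub _ eF) (sub _ fF). Qed.
End Comb.

Local Open Scope ring_scope.
Section Real.
Variables (R : realType) (V : finType).

Lemma incE (x : V -> R) e : incidence_mul x e = \sum_(v in e) x v.
Proof.
rewrite /incidence_mul /incidence [RHS]big_mkcond /=; apply: eq_bigr => v _.
by case: (v \in e); rewrite ?mul1r ?mul0r.
Qed.

Lemma sum_supp (x : V -> R) (A B : {set V}) :
  (forall v, v \in A -> v \notin B -> x v = 0) ->
  (forall v, v \in B -> v \notin A -> x v = 0) ->
  \sum_(v in A) x v = \sum_(v in B) x v.
Proof.
move=> h1 h2; rewrite big_mkcond [RHS]big_mkcond; apply: eq_bigr => v _.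
case vA: (v \in A); case vB: (v \in B) => //.
  by rewrite h1 ?vA ?vB.
by rewrite h2 ?vA ?vB.
Qed.

Lemma sum_all (x : V -> R) (A : {set V}) :
  (forall v, v \notin A -> x v = 0) -> \sum_(v in A) x v = \sum_v x v.
Proof.
move=> h; rewrite big_mkcond; apply: eq_bigr => v _.
by case: ifP => // /negbT /h ->.
Qed.

Lemma main (n : nat) : forall E : {set {set V}},
  (#|\bigcup_(e in E) e| <= n)%N -> one_sperner E -> E != set0 -> set0 \notin E ->
  exists x : V -> R, [/\ forall v, 0 <= x v,
     forall v, v \notin \bigcup_(e in E) e -> x v = 0,
     forall e, e \in E -> \sum_(v in e) x v = 1 & 1 <= \sum_v x v].
Proof.
elim: n => [|n IH] E hn hsp hne h0.
  exfalso; case/set0Pn: hne => e0 e0E.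
  have : e0 != set0 by apply: contraNneq h0 => <-.
  case/set0Pn => v ve0.
  have : (0 < #|\bigcup_(e in E) e|)%N by apply/card_gt0P; exists v; apply/bigcupP; exists e0.
  by rewrite leqn0 in hn; rewrite (eqP hn).
have [z [[e0 e0E ze0] hz]] := good_vertex hsp hne h0.
set U := \bigcup_(e in E) e.
have zU : z \in U by apply/bigcupP; exists e0.
have cardUz : (#|U :\ z| <= n)%N by move: hn; rewrite (cardsD1 z U) zU add1n ltnS.
have subU : forall (F : {set {set V}}),
    (forall f, f \in F -> exists2 e, e \in E & f \subset e :\ z) ->
    \bigcup_(f in F) f \subset U :\ z.
  move=> F h; apply/subsetP => v /bigcupP [f fF vf]; have [e eE sub] := h f fF.
  have := subsetP sub v vf; rewrite !inE => /andP[vz ve].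
  by rewrite vz /=; apply/bigcupP; exists e.
case hzE: ([set z] \in E).
- set E' := [set f in E | z \notin f].
  have E'sub : E' \subset E by apply/subsetP => f; rewrite inE => /andP[].
  have hE'z : forall e, e \in E -> z \in e -> e = [set z].
    move=> e eE ze; apply/eqP; apply/negPn/negP => ne.
    have [_ b _] := sp_facts hsp eE hzE ne.
    rewrite (_ : [set z] :\: e = set0) ?cards0 // in b.
    by apply/eqP; rewrite setD_eq0 sub1set.
  case: (eqVneq E' set0) => hE'.
  + exists (fun v => (v == z)%:R); split.
    * by move=> v; rewrite ler0n.
    * by move=> v vU; have -> : (v == z) = false by apply: contraNF vU => /eqP ->.
    * move=> e eE; have ze : z \in e.
        apply/negPn/negP => ze; have : e \in E' by rewrite inE eE ze.
        by rewrite hE' inE.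
      by rewrite (hE'z e eE ze) big_set1 eqxx.
    * by rewrite (bigD1 z) //= eqxx big1 ?addr0 // => v /negbTE ->.
  + have cE' : (#|\bigcup_(f in E') f| <= n)%N.
      apply: leq_trans cardUz; apply: subset_leq_card; apply: subU => f.
      rewrite inE => /andP[fE zf]; exists f => //; apply/subsetP => v vf.
      by rewrite in_setD1 vf andbT; apply: contraNneq zf => <-.
    have h0' : set0 \notin E' by apply: contra h0; apply: (subsetP E'sub).
    have [x2 [x2ge x2s x2e x2t]] := IH E' cE' (sp_sub E'sub hsp) hE' h0'.
    have x2z : x2 z = 0.
      apply: x2s; apply/negP => /bigcupP [f]; rewrite inE => /andP[_ zf].
      by rewrite (negbTE zf).
    exists (fun v => x2 v + (v == z)%:R); split.
    * move=> v; apply: addr_ge0 => //; exact: ler0n.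
    * move=> v vU; have vz : (v == z) = false by apply: contraNF vU => /eqP ->.
      rewrite vz addr0; apply: x2s; apply/negP => /bigcupP [f]; rewrite inE => /andP[fE _] vf.
      by move/negP: vU; apply; apply/bigcupP; exists f.
    * move=> e eE; rewrite big_split /=; case ze: (z \in e).
        by rewrite (hE'z e eE ze) !big_set1 x2z eqxx add0r.
      have eE' : e \in E' by rewrite inE eE ze.
      rewrite x2e // big1 ?addr0 // => v ve.
      by rewrite (_ : (v == z) = false) //; apply: contraFF ze => /eqP <-.
    * have -> : \sum_v (x2 v + (v == z)%:R) = \sum_v x2 v + 1.
        rewrite big_split /=; congr (_ + _).
        by rewrite (bigD1 z) //= eqxx big1 ?addr0 // => v /negbTE ->.
      move: x2t; move: (\sum_v x2 v) => s; lra.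
- set Ez := [set e in E | z \in e].
  set E1 := [set e :\ z | e in Ez].
  have E1ne : E1 != set0.
    by apply/set0Pn; exists (e0 :\ z); apply/imsetP; exists e0 => //; rewrite inE e0E ze0.
  have h01 : set0 \notin E1.
    apply/imsetP => [[e]]; rewrite inE => /andP[eE ze] /esym/eqP.
    rewrite setD_eq0 => sub.
    have : e = [set z] by apply/eqP; rewrite eqEsubset sub sub1set ze.
    by move=> h; rewrite -h eE in hzE.
  have sp1 : one_sperner E1.
    move=> e1 g1 /imsetP [e]; rewrite inE => /andP[eE ze] -> /imsetP [g].
    rewrite inE => /andP[gE zg] -> neq.
    have neg : e != g by apply: contraNneq neq => ->.
    have dif : forall a b : {set V}, z \in a -> z \in b -> (a :\ z) :\: (b :\ z) = a :\: b.
      move=> a b za zb; apply/setP => u; rewrite !inE.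
      by case: (eqVneq u z) => [->|uz] /=; rewrite ?zb.
    rewrite !dif //; exact: hsp.
  have c1 : (#|\bigcup_(f in E1) f| <= n)%N.
    apply: leq_trans cardUz; apply: subset_leq_card; apply: subU => f.
    by move=> /imsetP [e]; rewrite inE => /andP[eE _] ->; exists e.
  have [x1 [x1ge x1s x1e x1t]] := IH E1 c1 sp1 E1ne h01.
  set s1 := \sum_v x1 v.
  have s1pos : 0 < s1 by apply: lt_le_trans x1t; exact: ltr01.
  have x1z : x1 z = 0.
    by apply: x1s; apply/negP => /bigcupP [f /imsetP [e _ ->]]; rewrite !inE eqxx.
  have inv1 : s1^-1 <= 1 by rewrite invf_le1.
  have x1U : forall v, v \notin U -> x1 v = 0.
    move=> v vU; apply: x1s; apply/negP => /bigcupP [f /imsetP [e]].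
    rewrite inE => /andP[eE _] -> vf; move/negP: vU; apply; apply/bigcupP; exists e => //.
    by move: vf; rewrite inE => /andP[].
  exists (fun v => x1 v / s1 + (v == z)%:R * (1 - s1^-1)); split.
  * move=> v; apply: addr_ge0; first by apply: divr_ge0 => //; exact: ltW.
    by apply: mulr_ge0; [exact: ler0n | rewrite subr_ge0].
  * move=> v vU; have vz : (v == z) = false by apply: contraNF vU => /eqP ->.
    by rewrite vz mul0r addr0 x1U // mul0r.
  * move=> e eE; rewrite big_split /= -!mulr_suml.
    case ze: (z \in e).
      have -> : \sum_(v in e) x1 v = 1.
        rewrite (sum_supp (B := e :\ z)).
        - by apply: x1e; apply/imsetP; exists e => //; rewrite inE eE ze.
        - by move=> v ve; rewrite !inE ve andbT negbK => /eqP ->.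
        - by move=> v; rewrite !inE => /andP[_ ->].
      rewrite (bigD1 z) //= eqxx big1 ?addr0; last by move=> v /andP[_ /negbTE ->].
      by rewrite !mul1r addrC subrK.
    have -> : \sum_(v in e) x1 v = s1.
      apply: sum_all => v ve; apply: x1s; apply/negP => /bigcupP [f /imsetP [g]].
      rewrite inE => /andP[gE zg] -> vf.
      have := subsetP (hz g e gE eE zg (negbT ze)) v vf.
      by rewrite (negbTE ve).
    have -> : \sum_(v in e) (v == z)%:R = 0 :> R.
      apply: big1 => v ve.
      by rewrite (_ : (v == z) = false) //; apply: contraFF ze => /eqP <-.
    by rewrite mul0r addr0 mulfV // gt_eqF.
  * have hz1 : \sum_v ((v == z)%:R : R) = 1.
      by rewrite (bigD1 z) //= eqxx big1 ?addr0 // => v /negbTE ->.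
    rewrite big_split /= -mulr_suml -/s1 -mulr_suml hz1.
    rewrite mulfV ?gt_eqF // mul1r; move: inv1; move: (s1^-1) => t; lra.
Qed.
End Real.

Theorem lemma13 (R : realType) (V : finType) (E : {set {set V}}) :
  one_sperner E -> E != set0 -> E != [set set0] ->
  exists x : V -> R,
    (forall v, 0 <= x v) /\
    (forall e, e \in E -> incidence_mul x e = 1) /\
    1 <= \sum_(v : V) x v.
Proof.
move=> hsp hne hE1.
have h0 : set0 \notin E.
  apply/negP => h0.
  have : ~~ (E \subset [set set0]).
    by apply: contra hE1 => sub; rewrite eqEsubset sub sub1set h0.
  case/subsetPn => f fE; rewrite inE => fne.
  have nf : set0 != f by rewrite eq_sym.
  by have := hsp _ _ h0 fE nf; rewrite set0D cards0 min0n.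
have [x [xge _ xe xt]] := @main R V _ E (leqnn _) hsp hne h0.
exists x; split => //; split => // e eE; rewrite incE; exact: xe.
Qed.
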